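(* Let $C>0$, $\bar w\in[0,1]$, $\Psi_{\mathrm{prev}}\in[0,2]$, and let $\Psi$ be the limiter $$\Psi(r)=\max\big\{0,\ \min\{(2C+\Psi_{\mathrm{prev}})\,r,\ 1-\bar w+\bar w r,\ 2\}\big\}.$$ Suppose real numbers $Q_i^n,Q_i^{n-1},Q_{i-1}^n,Q_{i-1}^{n+1}$ satisfy the high-resolution compact inverse scheme $$Q_i^n + \tfrac12\Psi(r_i^n)\,(Q_{i-1}^{n+1}-Q_i^n) + C\,Q_i^n = Q_i^{n-1} + \tfrac12\Psi_{\mathrm{prev}}\,(Q_{i-1}^{n}-Q_i^{n-1}) + C\,Q_{i-1}^n,\qquad r_i^n=\frac{Q_{i-1}^n-Q_i^{n-1}}{Q_{i-1}^{n+1}-Q_i^n},$$ with the convention that the term $\Psi(r_i^n)(Q_{i-1}^{n+1}-Q_i^n)$ equals $0$ when $Q_{i-1}^{n+1}=Q_i^n$. Then $$\min\{Q_i^{n-1},Q_{i-1}^n\}\le Q_i^n\le \max\{Q_i^{n-1},Q_{i-1}^n\},$$ for every value of $C>0$ (no restriction on the Courant number).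
   Context: Scheme for $\kappa\partial_tq+v(t)\partial_xq=0$ on a space grid $x_i$ with steps $h_i$ and uniform time step $\tau$; $Q_i^n\approx q(x_i,t^n)$, $C=C_i^n=v^n\tau/(\kappa h_i)$ is the local Courant number, and $\Psi_{\mathrm{prev}}=\Psi(r_i^{n-1})$ is the (already computed) limiter value of the previous time level; values are computed by marching in space ($i=1,2,\dots$) and, for each $i$, in time ($n=1,2,\dots$). *)

(* Defs.v *)
From HB Require Import structures.
From mathcomp Require Import all_boot all_order all_algebra.
Set Implicit Arguments. Unset Strict Implicit. Unset Printing Implicit Defensive.
Import Order.TTheory GRing.Theory Num.Theory.
Local Open Scope ring_scope.

Definition limiter {R : realFieldType} (C wbar Psi_prev r : R) : R :=
  Num.max 0 (Num.min (Num.min ((2 * C + Psi_prev) * r) (1 - wbar + wbar * r)) 2).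

Definition limited_term {R : realFieldType} (C wbar Psi_prev num den : R) : R :=
  if den == 0 then 0 else limiter C wbar Psi_prev (num / den) * den.

(* Main.v *)
Require Import Defs.
From HB Require Import structures.
From mathcomp Require Import all_boot all_order all_algebra.
From mathcomp Require Import ring lra.
Import Order.TTheory GRing.Theory Num.Theory.
Local Open Scope ring_scope.

Lemma lt_bounds (R : realFieldType) (C wbar P num den : R) :
  0 < C -> 0 <= P ->
  0 <= limited_term C wbar P num den * num <= (2 * C + P) * num ^+ 2.
Proof.
move=> hC hP; rewrite /limited_term; case: eqP => [_|/eqP hd].
  by rewrite mul0r lexx /= mulr_ge0 ?sqr_ge0 //; lra.
set r := num / den.
have hn : num = r * den by rewrite /r divfK.
have hk : 0 <= 2 * C + P by lra.
have hd2 : 0 <= den ^+ 2 by rewrite sqr_ge0.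
set Ps := limiter C wbar P r.
have [hPr hPr2] : 0 <= Ps * r /\ Ps * r <= (2 * C + P) * r ^+ 2.
  rewrite /Ps /limiter.
  set m := Num.min _ _.
  have hm : m <= (2 * C + P) * r by rewrite /m !ge_min lexx.
  case: (lerP m 0) => hm0.
    rewrite mul0r lexx /=; nra.
  split; nra.
rewrite hn; apply/andP; split; nra.
Qed.

Lemma lt_zero (R : realFieldType) (C wbar P den : R) :
  limited_term C wbar P 0 den = 0.
Proof.
rewrite /limited_term; case: eqP => // _.
rewrite mul0r /limiter.
set m := Num.min _ _.
have hm : m <= 0 by rewrite /m !ge_min mulr0 lexx.
by rewrite max_l // mul0r.
Qed.

Theorem mainTheorem5 (R : realFieldType) (C wbar Psi_prev Qin Qinm1 Qim1n Qim1np1 : R) :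
  0 < C -> 0 <= wbar <= 1 -> 0 <= Psi_prev <= 2 ->
  Qin + 2^-1 * limited_term C wbar Psi_prev (Qim1n - Qinm1) (Qim1np1 - Qin) + C * Qin
    = Qinm1 + 2^-1 * Psi_prev * (Qim1n - Qinm1) + C * Qim1n ->
  Num.min Qinm1 Qim1n <= Qin <= Num.max Qinm1 Qim1n.
Proof.
move=> hC /andP[hw0 hw1] /andP[hP0 hP2] E.
have /andP[hL1 hL2] := @lt_bounds R C wbar Psi_prev (Qim1n - Qinm1) (Qim1np1 - Qin) hC hP0.
move: E hL1 hL2; set L := limited_term _ _ _ _ _ => E hL1 hL2.
set s := Qim1n - Qinm1 in E hL1 hL2.
set h : R := 2^-1 in E.
have h2 : h * 2 = 1 by rewrite /h mulVf // pnatr_eq0.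
have h0 : 0 < h by rewrite /h invr_gt0 ltr0n.
have E' : (1 + C) * (Qin - Qinm1) = (C + Psi_prev * h) * s - L * h.
  apply/eqP; rewrite -subr_eq0; apply/eqP.
  transitivity ((Qin + h * L + C * Qin) - (Qinm1 + h * Psi_prev * s + C * Qim1n)).
    rewrite /s; ring.
  by rewrite E subrr.
have hs2 : 0 <= s ^+ 2 by rewrite sqr_ge0.
have ha : 0 <= (Qin - Qinm1) * s.
  have : 0 <= (1 + C) * ((Qin - Qinm1) * s).
    rewrite mulrA E'; nra.
  rewrite pmulr_rge0 //; lra.
have hb : (Qin - Qim1n) * s <= 0.
  have : (1 + C) * ((Qin - Qim1n) * s) <= 0.
    have -> : Qin - Qim1n = (Qin - Qinm1) - s by rewrite /s; ring.
    rewrite mulrBl mulrBr mulrA E'; nra.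
  rewrite pmulr_rle0 //; lra.
rewrite /s in ha hb.
have [hab|hab] := eqVneq Qinm1 Qim1n.
  move: E'; rewrite /s /L hab subrr lt_zero mulr0 mul0r subrr => /eqP.
  rewrite mulf_eq0 subr_eq0 => /orP[|/eqP ->]; last by rewrite minxx maxxx lexx.
  move=> /eqP; lra.
case: (ltrP Qinm1 Qim1n) => hab'.
  apply/andP; split; nra.
apply/andP; split; nra.
Qed.
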